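(* For $n=4$ (so $d_4=\frac{\sqrt5}{3}$), $$\lim_{h\to\sqrt5/3}\tilde B_4(h)=\frac{5\left(2\sqrt3+\ln(26-15\sqrt3)\right)}{4\ln(2-\sqrt3)},$$ and consequently $c_0(h)=\frac{1}{1-\tilde B_4(h)}$ satisfies $$\lim_{h\to\sqrt5/3}c_0(h)=\frac{1}{1-\frac{5\left(2\sqrt3+\ln(26-15\sqrt3)\right)}{4\ln(2-\sqrt3)}} .$$
   Context: For $n=4$: $W(u)=\frac{u^2}{2}-\frac{u^6}{30}$, $H(u,v)=\frac{v^2}{2}+W(u)$; for $h\in(0,\frac{\sqrt5}{3})$, $\Gamma_h$ is the periodic orbit in $\{H=h\}$ surrounding the origin of $u'=v$, $v'=-u+\frac15u^5$, oriented clockwise; $\tilde B_4(h)=\oint_{\Gamma_h}u^4v\,du\big/\oint_{\Gamma_h}v\,du$. *)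

(* Defs.v *)
From Stdlib Require Import Reals Lra.
From Coquelicot Require Import Coquelicot.
Open Scope R_scope.

Definition W (u : R) : R := u ^ 2 / 2 - u ^ 6 / 30.
Definition H (u v : R) : R := v ^ 2 / 2 + W u.

(* d_4 = sqrt 5 / 3 = W(5^(1/4)), the energy of the saddles (+-5^(1/4), 0). *)
Definition d4 : R := sqrt 5 / 3.
Definition u_saddle : R := sqrt (sqrt 5).

(* Half-width of the oval Gamma_h: the positive turning point a(h), i.e. the
   root of W(u) = h in (0, 5^(1/4)) (W is increasing there), defined as the
   supremum of {u in [0, 5^(1/4)] | W u <= h}. *)
Definition amp (h : R) : R :=
  real (Lub_Rbar (fun u => 0 <= u <= u_saddle /\ W u <= h)).

(* Gamma_h = {H = h} /\ {|u| <= a(h)}, the oval around the origin, oriented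
   clockwise: the upper arc v = +sqrt(2(h - W u)) is run with u increasing from
   -a(h) to a(h), the lower arc v = -sqrt(2(h - W u)) with u decreasing from
   a(h) to -a(h). *)
Definition vplus (h u : R) : R := sqrt (2 * (h - W u)).

Definition oint_du (P : R -> R -> R) (h : R) : R :=
  RInt (fun u => P u (vplus h u)) (- amp h) (amp h)
  + RInt (fun u => P u (- vplus h u)) (amp h) (- amp h).

Definition Btilde4 (h : R) : R :=
  oint_du (fun u v => u ^ 4 * v) h / oint_du (fun u v => v) h.

Definition c0 (h : R) : R := 1 / (1 - Btilde4 h).

Definition B4_limit : R :=
  5 * (2 * sqrt 3 + ln (26 - 15 * sqrt 3)) / (4 * ln (2 - sqrt 3)).

(* Main.v *)
Require Import Defs.
From Stdlib Require Import Reals Lra Psatz FunctionalExtensionality.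
From Coquelicot Require Import Coquelicot.
Open Scope R_scope.

Lemma s5_pos : 0 < sqrt 5.
Proof. apply sqrt_lt_R0; lra. Qed.
Lemma s5_sq : sqrt 5 * sqrt 5 = 5.
Proof. apply sqrt_sqrt; lra. Qed.
Lemma a_pos : 0 < u_saddle.
Proof. unfold u_saddle; apply sqrt_lt_R0, s5_pos. Qed.
Lemma a_sq : u_saddle * u_saddle = sqrt 5.
Proof. unfold u_saddle; apply sqrt_sqrt; left; apply s5_pos. Qed.

Lemma amp_props (h : R) : 0 <= h ->
  0 <= amp h <= u_saddle /\ (forall u, amp h < u <= u_saddle -> h < W u).
Proof.
  intros Hh.
  set (E := fun u => 0 <= u <= u_saddle /\ W u <= h).
  assert (HE0 : E 0). { unfold E, W. split. pose proof a_pos; lra. lra. }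
  destruct (Lub_Rbar_correct E) as [Hub Hlub].
  assert (Hle : Rbar_le (Lub_Rbar E) u_saddle).
  { apply Hlub. intros x [Hx _]. simpl. lra. }
  pose proof (Hub 0 HE0) as H0.
  unfold amp. fold E.
  destruct (Lub_Rbar E) as [l| |] eqn:Hl; simpl in Hle, H0 |- *; try contradiction.
  split. lra.
  intros u Hu. destruct (Rlt_or_le h (W u)) as [|Hw]; auto.
  assert (Eu : E u). { unfold E. split. lra. auto. }
  pose proof (Hub u Eu) as Hx. simpl in Hx. lra.
Qed.

Lemma W_even u : W (- u) = W u.
Proof. unfold W; field. Qed.

Lemma vplus_cont h x : continuous (vplus h) x.
Proof.
  unfold vplus. apply continuous_sqrt_comp.
  apply (ex_derive_continuous (fun x => 2 * (h - W x))). unfold W. auto_derive. auto.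
Qed.

Lemma prod_cont (g : R -> R) h x : (forall y, continuous g y) ->
  continuous (fun u => g u * vplus h u) x.
Proof.
  intros Hg. apply (continuous_mult g (vplus h)). apply Hg. apply vplus_cont.
Qed.

Lemma exRI (g : R -> R) h a b : (forall y, continuous g y) ->
  ex_RInt (fun u => g u * vplus h u) a b.
Proof. intros Hg. apply (ex_RInt_continuous (V := R_CompleteNormedModule)). intros; apply prod_cont; auto. Qed.

Lemma t1 (g : R -> R) h A : (forall y, continuous g y) ->
  RInt (fun u => g u * - vplus h u) A (- A) = RInt (fun u => g u * vplus h u) (-A) A.
Proof.
  intros Hg.
  pose proof (opp_RInt_swap (V := R_CompleteNormedModule) (fun u => g u * vplus h u) A (-A) (exRI _ _ _ _ Hg)) as E1.
  pose proof (RInt_opp (V := R_CompleteNormedModule) (fun u => g u * vplus h u) A (-A) (exRI _ _ _ _ Hg)) as E3.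
  rewrite <- E1, <- E3. apply (RInt_ext (V := R_CompleteNormedModule)).
  intros x _. change (g x * - vplus h x = - (g x * vplus h x)). ring.
Qed.
Lemma Z1 (g : R -> R) h A B : A <= B -> (forall u, A < u < B -> h < W u) ->
  RInt (fun u => g u * vplus h u) A B = 0.
Proof.
  intros HAB Hout.
  rewrite (RInt_ext (V := R_CompleteNormedModule) _ (fun _ => 0)).
  rewrite RInt_const. change (scal (B - A) 0) with ((B - A) * 0). apply Rmult_0_r.
  intros x Hx. rewrite Rmin_left in Hx by lra. rewrite Rmax_right in Hx by lra.
  unfold vplus. rewrite sqrt_neg_0. apply Rmult_0_r.
  pose proof (Hout x Hx). lra.
Qed.
Lemma oint_gen (g : R -> R) h A : (forall y, continuous g y) ->
  0 <= A <= u_saddle -> (forall u, A < u <= u_saddle -> h < W u) ->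
  RInt (fun u => g u * vplus h u) (- A) A +
  RInt (fun u => g u * - vplus h u) A (- A) =
  2 * RInt (fun u => g u * vplus h u) (- u_saddle) u_saddle.
Proof.
  intros Hg [HA0 HAa] Hout.
  rewrite t1 by auto.
  pose proof (Z1 g h A u_saddle HAa ltac:(intros; apply Hout; lra)) as Za.
  pose proof (Z1 g h (- u_saddle) (- A) ltac:(lra)
     ltac:(intros u Hu; rewrite <- W_even; apply Hout; lra)) as Zb.
  pose proof (RInt_Chasles (V := R_CompleteNormedModule) (fun u => g u * vplus h u) (- u_saddle) (- A) u_saddle (exRI g h _ _ Hg) (exRI g h _ _ Hg)) as C1.
  pose proof (RInt_Chasles (V := R_CompleteNormedModule) (fun u => g u * vplus h u) (- A) A u_saddle (exRI g h _ _ Hg) (exRI g h _ _ Hg)) as C2.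
  change plus with Rplus in C1, C2.
  rewrite Zb in C1. rewrite Za in C2. lra.
Qed.

Lemma oint_eq (g : R -> R) h : 0 <= h -> (forall y, continuous g y) ->
  oint_du (fun u v => g u * v) h =
  2 * RInt (fun u => g u * vplus h u) (- u_saddle) u_saddle.
Proof.
  intros Hh Hg. destruct (amp_props h Hh) as [HA Hout].
  unfold oint_du. apply oint_gen; auto.
Qed.

Lemma sqrt_diff x y : x <= y -> 0 <= sqrt y - sqrt x <= sqrt (y - x).
Proof.
  intros Hxy. split.
  - pose proof (sqrt_le_1_alt x y Hxy). lra.
  - destruct (Rle_or_lt x 0) as [Hx|Hx].
    + rewrite (sqrt_neg_0 x Hx). pose proof (sqrt_le_1_alt y (y - x) ltac:(lra)). lra.
    + assert (Hs : sqrt y <= sqrt x + sqrt (y - x)).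
      { pose proof (sqrt_sqrt x ltac:(lra)). pose proof (sqrt_sqrt (y-x) ltac:(lra)).
        pose proof (sqrt_pos x). pose proof (sqrt_pos (y - x)).
        rewrite <- (sqrt_pow2 (sqrt x + sqrt (y - x))) by lra.
        apply sqrt_le_1_alt. nra. }
      lra.
Qed.

Lemma d4_pos : 0 < d4.
Proof. unfold d4. pose proof s5_pos. lra. Qed.

Lemma bound_diff (g : R -> R) M h : (forall y, continuous g y) ->
  (forall u, - u_saddle <= u <= u_saddle -> Rabs (g u) <= M) ->
  h <= d4 ->
  Rabs (RInt (fun u => g u * vplus h u) (- u_saddle) u_saddle
        - RInt (fun u => g u * vplus d4 u) (- u_saddle) u_saddle)
  <= (u_saddle - - u_saddle) * (M * sqrt (2 * (d4 - h))).
Proof.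
  intros Hg HM Hh. pose proof a_pos.
  pose proof (RInt_minus (V := R_CompleteNormedModule) (fun u => g u * vplus h u) (fun u => g u * vplus d4 u) (- u_saddle) u_saddle (exRI _ _ _ _ Hg) (exRI _ _ _ _ Hg)) as E.
  change minus with Rminus in E. rewrite <- E.
  apply abs_RInt_le_const. lra.
  apply (ex_RInt_continuous (V := R_CompleteNormedModule)). intros z _.
  apply (continuous_minus (fun u => g u * vplus h u) (fun u => g u * vplus d4 u)); apply prod_cont; auto.
  intros t Ht. simpl. rewrite <- Rmult_minus_distr_l, Rabs_mult.
  pose proof (HM t Ht) as Hgt.
  unfold vplus.
  pose proof (sqrt_diff (2 * (h - W t)) (2 * (d4 - W t)) ltac:(lra)) as [D1 D2].
  replace (2 * (d4 - W t) - 2 * (h - W t)) with (2 * (d4 - h)) in D2 by ring.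
  rewrite Rabs_minus_sym, (Rabs_right (_ - _)) by lra.
  apply Rmult_le_compat; auto using Rabs_pos.
Qed.

Lemma lim_G (g : R -> R) M : (forall y, continuous g y) ->
  (forall u, - u_saddle <= u <= u_saddle -> Rabs (g u) <= M) ->
  filterlim (fun h => RInt (fun u => g u * vplus h u) (- u_saddle) u_saddle)
    (at_left d4) (locally (RInt (fun u => g u * vplus d4 u) (- u_saddle) u_saddle)).
Proof.
  intros Hg HM. pose proof a_pos as Ha.
  assert (HM0 : 0 <= M). { pose proof (HM 0 ltac:(lra)). pose proof (Rabs_pos (g 0)). lra. }
  apply filterlim_locally. intros eps.
  set (K := (u_saddle - - u_saddle) * M).
  assert (HK : 0 <= K) by (unfold K; nra).
  pose proof (cond_pos eps) as He.
  assert (Hd : 0 < eps * eps / (2 * (K + 1) * (K + 1))).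
  { apply Rdiv_lt_0_compat; nra. }
  exists (mkposreal _ Hd). intros y Hy Hyl. simpl in Hy.
  change (Rabs (y + - d4) < eps * eps / (2 * (K + 1) * (K + 1))) in Hy.
  change (Rabs (RInt (fun u => g u * vplus y u) (- u_saddle) u_saddle +
     - RInt (fun u => g u * vplus d4 u) (- u_saddle) u_saddle) < eps).
  pose proof (bound_diff g M y Hg HM ltac:(lra)) as B.
  rewrite Rabs_left1 in Hy by lra.
  set (t := sqrt (2 * (d4 - y))) in B.
  assert (Ht0 : 0 <= t) by apply sqrt_pos.
  assert (Ht2 : t * t = 2 * (d4 - y)) by (apply sqrt_sqrt; lra).
  assert (Hx : t * t * ((K + 1) * (K + 1)) < eps * eps).
  { rewrite Ht2. apply Rmult_lt_reg_r with (/ (2 * (K+1) * (K+1))).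
    apply Rinv_0_lt_compat; nra.
    replace (2 * (d4 - y) * ((K + 1) * (K + 1)) * / (2 * (K + 1) * (K + 1))) with (d4 - y) by (field; lra).
    unfold Rdiv in Hy. lra. }
  assert (K * t < eps) by nra.
  unfold K in *. unfold Rminus in B. nra.
Qed.

Lemma s15_pos : 0 < sqrt 15.
Proof. apply sqrt_lt_R0; lra. Qed.
Lemma s15_sq : sqrt 15 * sqrt 15 = 15.
Proof. apply sqrt_sqrt; lra. Qed.

Lemma vplus_id u : u * u <= sqrt 5 ->
  vplus d4 u = (sqrt 5 - u ^ 2) * sqrt (u ^ 2 + 2 * sqrt 5) / sqrt 15.
Proof.
  intros Hu. pose proof s5_pos. pose proof s5_sq. pose proof s15_pos. pose proof s15_sq.
  unfold vplus. apply sqrt_lem_1.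
  - unfold W, d4. 
    assert (u ^ 6 - 15 * u^2 + 10 * sqrt 5 = (sqrt 5 - u^2)^2 * (u^2 + 2 * sqrt 5)).
    { replace (u^6) with ((u^2)^3) by ring. nra. }
    assert (0 <= (sqrt 5 - u^2)^2 * (u^2 + 2 * sqrt 5)).
    { apply Rmult_le_pos. apply pow2_ge_0. nra. }
    nra.
  - apply Rmult_le_pos. apply Rmult_le_pos. nra. apply sqrt_pos.
    left; apply Rinv_0_lt_compat; lra.
  - pose proof (sqrt_sqrt (u ^ 2 + 2 * sqrt 5) ltac:(nra)) as HR.
    set (R := sqrt (u ^ 2 + 2 * sqrt 5)) in *.
    replace ((sqrt 5 - u ^ 2) * R / sqrt 15 * ((sqrt 5 - u ^ 2) * R / sqrt 15))
      with ((sqrt 5 - u^2)^2 * (R * R) / (sqrt 15 * sqrt 15)) by (field; lra).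
    rewrite HR, H2. unfold W, d4.
    replace (u^6) with ((u^2)^3) by ring.
    assert (H5 : sqrt 5 ^ 2 = 5) by (simpl; lra).
    assert (H6 : sqrt 5 ^ 3 = 5 * sqrt 5) by (simpl; nra).
    field_simplify. rewrite H5, H6. field.
Qed.

Definition F0 (u : R) : R :=
  ((- u ^ 3 / 4 + sqrt 5 * u / 4) * sqrt (u ^ 2 + 2 * sqrt 5)
   + 3 * sqrt 5 ^ 2 / 2 * ln (u + sqrt (u ^ 2 + 2 * sqrt 5))) / sqrt 15.

Lemma F0_der x : x * x <= sqrt 5 -> is_derive F0 x (1 * vplus d4 x).
Proof.
  intros Hx. pose proof s5_pos. pose proof s15_pos.
  rewrite vplus_id by auto.
  assert (HX : 0 < x ^ 2 + 2 * sqrt 5) by nra.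
  pose proof (sqrt_sqrt _ (Rlt_le _ _ HX)) as HR.
  pose proof (sqrt_lt_R0 _ HX) as HRp.
  assert (Hs : 0 < x + sqrt (x ^ 2 + 2 * sqrt 5)) by nra.
  unfold F0. auto_derive.
  - simpl in *. nra.
  - simpl (x ^ 2) in *. 
    set (R := sqrt (x * (x * 1) + 2 * sqrt 5)) in *.
    apply Rminus_diag_uniq.
    transitivity ((- 3 * x ^ 2 / 4 + sqrt 5 / 4 - (sqrt 5 - x * (x * 1))) / (R * sqrt 15)
       * (R * R - (x * (x * 1) + 2 * sqrt 5))).
    + field. lra.
    + rewrite HR. ring.
Qed.

Definition F4 (u : R) : R :=
  ((- u ^ 7 / 8 + sqrt 5 * u ^ 5 / 8 + 3 * sqrt 5 ^ 2 / 16 * u ^ 3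
     - 9 * sqrt 5 ^ 3 / 16 * u) * sqrt (u ^ 2 + 2 * sqrt 5)
   + 9 * sqrt 5 ^ 4 / 8 * ln (u + sqrt (u ^ 2 + 2 * sqrt 5))) / sqrt 15.

Lemma F4_der x : x * x <= sqrt 5 -> is_derive F4 x (x ^ 4 * vplus d4 x).
Proof.
  intros Hx. pose proof s5_pos. pose proof s15_pos.
  rewrite vplus_id by auto.
  assert (HX : 0 < x ^ 2 + 2 * sqrt 5) by nra.
  pose proof (sqrt_sqrt _ (Rlt_le _ _ HX)) as HR.
  pose proof (sqrt_lt_R0 _ HX) as HRp.
  assert (Hs : 0 < x + sqrt (x ^ 2 + 2 * sqrt 5)) by nra.
  unfold F4. auto_derive.
  - simpl in *. nra.
  - simpl (x ^ 2) in *. 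
    set (R := sqrt (x * (x * 1) + 2 * sqrt 5)) in *.
    apply Rminus_diag_uniq.
    transitivity ((- 7 * x ^ 6 / 8 + 5 * sqrt 5 * x ^ 4 / 8 + 9 * sqrt 5 ^ 2 / 16 * x ^ 2
        - 9 * sqrt 5 ^ 3 / 16 - x ^ 4 * (sqrt 5 - x * (x * 1))) / (R * sqrt 15)
       * (R * R - (x * (x * 1) + 2 * sqrt 5))).
    + field. lra.
    + rewrite HR. ring.
Qed.

Definition Qa := sqrt (u_saddle ^ 2 + 2 * sqrt 5).
Definition Lam := ln (u_saddle + Qa) - ln (- u_saddle + Qa).

Lemma Qa_pos : 0 < Qa.
Proof. unfold Qa. apply sqrt_lt_R0. pose proof s5_pos. pose proof a_pos. nra. Qed.
Lemma Qa_sq : Qa * Qa = 3 * sqrt 5.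
Proof. unfold Qa. rewrite sqrt_sqrt. pose proof a_sq. simpl. nra.
  pose proof s5_pos. pose proof a_pos. nra. Qed.
Lemma aQ : u_saddle * Qa = sqrt 15.
Proof.
  symmetry. apply sqrt_lem_1. lra. pose proof a_pos; pose proof Qa_pos; nra.
  pose proof a_sq. pose proof Qa_sq. pose proof s5_sq.
  replace (u_saddle * Qa * (u_saddle * Qa)) with ((u_saddle * u_saddle) * (Qa * Qa)) by ring.
  rewrite H, H0. nra.
Qed.

Lemma inI x : - u_saddle <= x <= u_saddle -> x * x <= sqrt 5.
Proof. intros. rewrite <- a_sq. pose proof a_pos. nra. Qed.

Lemma G0_val : RInt (fun u => 1 * vplus d4 u) (- u_saddle) u_saddle
  = (3 * sqrt 5 ^ 2 / 2 * Lam) / sqrt 15.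
Proof.
  pose proof a_pos as Ha.
  rewrite (is_RInt_unique _ _ _ (F0 u_saddle - F0 (- u_saddle))).
  2:{ apply (is_RInt_derive (V := R_CompleteNormedModule)).
      - intros x Hx. rewrite Rmin_left in Hx by lra. rewrite Rmax_right in Hx by lra.
        apply F0_der. apply inI; lra.
      - intros. apply (prod_cont (fun _ => 1)). intros; apply continuous_const. }
  unfold F0, Lam. replace ((- u_saddle) ^ 2) with (u_saddle ^ 2) by ring.
  fold Qa. rewrite <- aQ. pose proof Qa_pos. rewrite <- a_sq. match goal with |- ?A = ?B => change (@eq R A B) end. field. nra.
Qed.

Lemma G4_val : RInt (fun u => u ^ 4 * vplus d4 u) (- u_saddle) u_saddle
  = (- 3 / 4 * sqrt 5 ^ 3 * sqrt 15 + 9 * sqrt 5 ^ 4 / 8 * Lam) / sqrt 15.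
Proof.
  pose proof a_pos as Ha.
  rewrite (is_RInt_unique _ _ _ (F4 u_saddle - F4 (- u_saddle))).
  2:{ apply (is_RInt_derive (V := R_CompleteNormedModule)).
      - intros x Hx. rewrite Rmin_left in Hx by lra. rewrite Rmax_right in Hx by lra.
        apply F4_der. apply inI; lra.
      - intros. apply (prod_cont (fun u => u ^ 4)). intros.
        apply (ex_derive_continuous (fun u => u ^ 4)). auto_derive. auto. }
  unfold F4, Lam. replace ((- u_saddle) ^ 2) with (u_saddle ^ 2) by ring.
  fold Qa. rewrite <- aQ. pose proof Qa_pos. rewrite <- a_sq. match goal with |- ?A = ?B => change (@eq R A B) end. field. nra.
Qed.

Lemma s3_eq : sqrt 3 = Qa / u_saddle.
Proof.
  pose proof a_pos. pose proof aQ. pose proof a_sq.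
  assert (sqrt 15 = sqrt 5 * sqrt 3). { rewrite <- sqrt_mult by lra. f_equal; lra. }
  rewrite H2, <- H1 in H0. field_simplify_eq; [|lra].
  apply Rmult_eq_reg_l with u_saddle; [|lra]. nra.
Qed.

Lemma Lam_val : Lam = ln (2 + sqrt 3).
Proof.
  pose proof a_pos. pose proof Qa_pos. pose proof Qa_sq. pose proof a_sq. pose proof s5_pos.
  assert (HQa : u_saddle < Qa) by nra.
  unfold Lam. rewrite <- ln_div by lra. f_equal.
  rewrite s3_eq. field_simplify_eq; try lra. 
Qed.

Lemma s3_facts : 1.7 < sqrt 3 < 1.75.
Proof.
  pose proof (sqrt_sqrt 3 ltac:(lra)). pose proof (sqrt_pos 3). split; nra.
Qed.

Lemma Lam_bounds : 0 < Lam < 3 / 2.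
Proof.
  rewrite Lam_val. pose proof s3_facts. split.
  - rewrite <- ln_1. apply ln_increasing; lra.
  - rewrite <- (ln_exp (3/2)). apply ln_increasing. lra.
    pose proof (exp_ge_taylor (3/2) 3 ltac:(lra)). simpl in H0.
    unfold Factorial.fact in H0; simpl in H0. lra.
Qed.

Definition G0 h := RInt (fun u => 1 * vplus h u) (- u_saddle) u_saddle.
Definition G4 h := RInt (fun u => u ^ 4 * vplus h u) (- u_saddle) u_saddle.

Lemma Btilde_eq h : 0 <= h -> Btilde4 h = (2 * G4 h) * / (2 * G0 h).
Proof.
  intros Hh. unfold Btilde4, G0, G4.
  assert (E : (fun u v : R => v) = (fun u v => (fun _ => 1) u * v)).
  { apply functional_extensionality; intro u; apply functional_extensionality; intro v. lra. }
  rewrite E.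
  rewrite (oint_eq (fun u => u ^ 4)) by (auto; intros; apply (ex_derive_continuous (fun u => u ^ 4)); auto_derive; auto).
  rewrite (oint_eq (fun _ => 1)) by (auto; intros; apply continuous_const).
  reflexivity.
Qed.

Lemma limG0 : filterlim G0 (at_left d4) (locally (G0 d4)).
Proof.
  apply (lim_G (fun _ => 1) 1). intros; apply continuous_const.
  intros. rewrite Rabs_R1. lra.
Qed.

Lemma limG4 : filterlim G4 (at_left d4) (locally (G4 d4)).
Proof.
  apply (lim_G (fun u => u ^ 4) 5).
  intros; apply (ex_derive_continuous (fun u => u ^ 4)); auto_derive; auto.
  intros u Hu. pose proof (inI u Hu). pose proof s5_sq. pose proof s5_pos.
  rewrite Rabs_right by (apply Rle_ge; replace (u^4) with ((u*u)^2) by ring; apply pow2_ge_0).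
  replace (u^4) with ((u*u)*(u*u)) by ring.
  assert (0 <= u * u) by nra. nra.
Qed.

Lemma G0d_val : G0 d4 = (15 / 2 * Lam) / sqrt 15.
Proof. unfold G0. rewrite G0_val. pose proof s5_sq. pose proof s15_pos.
  match goal with |- ?A = ?B => change (@eq R A B) end.
  replace (sqrt 5 ^ 2) with 5 by (simpl; nra). field. lra. Qed.

Lemma G4d_val : G4 d4 = (- 15 / 4 * (5 * sqrt 3) + 225 / 8 * Lam) / sqrt 15.
Proof.
  unfold G4. rewrite G4_val. pose proof s5_sq. pose proof s15_pos.
  match goal with |- ?A = ?B => change (@eq R A B) end.
  assert (E : sqrt 15 = sqrt 5 * sqrt 3). { rewrite <- sqrt_mult by lra. f_equal; lra. }
  replace (sqrt 5 ^ 4) with 25 by (replace (sqrt 5 ^ 4) with ((sqrt 5 * sqrt 5) * (sqrt 5 * sqrt 5)) by ring; rewrite H; ring).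
  assert (K : sqrt 5 ^ 3 * sqrt 15 = 25 * sqrt 3).
  { rewrite E. replace (sqrt 5 ^ 3 * (sqrt 5 * sqrt 3)) with ((sqrt 5 * sqrt 5) * (sqrt 5 * sqrt 5) * sqrt 3) by ring. rewrite H. ring. }
  replace (- 3 / 4 * sqrt 5 ^ 3 * sqrt 15) with (- 3 / 4 * (sqrt 5 ^ 3 * sqrt 15)) by ring.
  rewrite K.
  field. lra.
Qed.

Lemma B4_eq : B4_limit = (2 * G4 d4) * / (2 * G0 d4).
Proof.
  rewrite G0d_val, G4d_val. unfold B4_limit.
  pose proof s3_facts. pose proof Lam_bounds. pose proof s15_pos.
  assert (HL : ln (2 - sqrt 3) = - Lam).
  { rewrite Lam_val. rewrite <- ln_Rinv by lra. f_equal. field_simplify_eq; try lra.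
    pose proof (sqrt_sqrt 3 ltac:(lra)). nra. }
  assert (HL3 : ln (26 - 15 * sqrt 3) = 3 * ln (2 - sqrt 3)).
  { replace (26 - 15 * sqrt 3) with ((2 - sqrt 3) ^ 3).
    rewrite ln_pow by lra. simpl. ring.
    pose proof (sqrt_sqrt 3 ltac:(lra)). simpl. nra. }
  rewrite HL3, HL. field. lra.
Qed.

Lemma limB : filterlim Btilde4 (at_left d4) (locally B4_limit).
Proof.
  assert (H0 : G0 d4 <> 0).
  { rewrite G0d_val. pose proof Lam_bounds. pose proof s15_pos.
    apply Rgt_not_eq. apply Rlt_gt. apply Rdiv_lt_0_compat; lra. }
  apply (filterlim_ext_loc (fun h => (2 * G4 h) * / (2 * G0 h))).
  { exists (mkposreal _ d4_pos). intros y Hy Hyl. simpl in Hy.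
    change (Rabs (y + - d4) < d4) in Hy. rewrite Rabs_left1 in Hy by lra.
    symmetry. apply Btilde_eq. lra. }
  rewrite B4_eq.
  apply (filterlim_comp_2 (G := locally (2 * G4 d4)) (H := locally (/ (2 * G0 d4))) (fun h => 2 * G4 h) (fun h => / (2 * G0 h)) Rmult).
  - apply (filterlim_comp _ _ _ G4 (fun x => 2 * x) _ _ _ limG4).
    apply (ex_derive_continuous (fun x => 2 * x)). auto_derive. auto.
  - apply (filterlim_comp _ _ _ G0 (fun x => / (2 * x)) _ _ _ limG0).
    apply (ex_derive_continuous (fun x => / (2 * x))). auto_derive. lra.
  - apply (filterlim_mult (K := R_AbsRing)).
Qed.

Lemma B4_ne1 : 1 - B4_limit <> 0.
Proof.
  rewrite B4_eq, G0d_val, G4d_val.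
  pose proof s3_facts. pose proof Lam_bounds. pose proof s15_pos.
  replace (2 * ((- 15 / 4 * (5 * sqrt 3) + 225 / 8 * Lam) / sqrt 15) *
      / (2 * (15 / 2 * Lam / sqrt 15)))
    with (- 5 * sqrt 3 / (2 * Lam) + 15 / 4) by (field; lra).
  apply Rgt_not_eq.
  assert (5 * sqrt 3 / (2 * Lam) > 11 / 4).
  { apply Rlt_gt. apply Rmult_lt_reg_r with (2 * Lam). lra.
    replace (5 * sqrt 3 / (2 * Lam) * (2 * Lam)) with (5 * sqrt 3) by (field; lra). nra. }
  unfold Rdiv in *. lra.
Qed.

Theorem mainTheorem8 :
  filterlim Btilde4 (at_left d4) (locally B4_limit) /\
  filterlim c0 (at_left d4) (locally (1 / (1 - B4_limit))).
Proof.
  split. exact limB.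
  unfold c0.
  apply (filterlim_comp _ _ _ Btilde4 (fun x => 1 / (1 - x)) _ _ _ limB).
  apply (ex_derive_continuous (fun x => 1 / (1 - x))). auto_derive. apply B4_ne1.
Qed.
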